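(* Let $\mathcal{M}$ be a $k\times\ell$ gridding matrix whose cell graph $G_\mathcal{M}$ is disconnected. Choose a connected component of $G_\mathcal{M}$, let $\mathcal{M}_1$ be the submatrix of $\mathcal{M}$ formed by the rows and columns containing vertices of this component, and $\mathcal{M}_2$ the submatrix formed by the remaining rows and columns. For an $\mathcal{M}$-gridded permutation $\pi$, let $\pi_1$ and $\pi_2$ be the subpermutations of $\pi$ formed by the points lying in the cells of $\mathcal{M}_1$ and of $\mathcal{M}_2$, respectively. Then $\mathrm{gw}(\pi)\le\max(\mathrm{gw}(\pi_1),\mathrm{gw}(\pi_2))+\max(k,\ell)$.
   Context: Permutations of length $n$ are identified with their diagrams $\{(i,\pi_i)\}$. A $k\times\ell$ gridding matrix $\mathcal{M}$ has permutation classes as entries. An $\mathcal{M}$-gridding of $\pi$ of length $n$ consists of possibly empty disjoint integer intervals $I_1<\dots<I_k$, $J_1<\dots<J_\ell$, each family with union $[n]$, such that the points in each cell $I_i\times J_j$ form a pattern in $\mathcal{M}_{i,j}$; an $\mathcal{M}$-gridded permutation is a permutation with a fixed $\mathcal{M}$-gridding. The cell graph $G_\mathcal{M}$ has as vertices the cells with infinite entries, adjacent when they share a row or column and all cells strictly between them are finite or empty; assume all entries of $\mathcal{M}$ are infinite or empty. Intervalicity of $A\subseteq[n]$ is the least number of disjoint integer intervals with union $A$; grid-complexity of a point set is the maximum of the intervalicities of its two axis projections. A grid tree of $\pi$ is a rooted binary tree with leaves labeled bijectively by points of $\pi$; its grid-width is the maximum over vertices $v$ of the grid-complexity of the leaf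 labels below $v$; $\mathrm{gw}(\pi)$ is the minimum grid-width over grid trees of $\pi$ (for a subpermutation, computed on its standardization, equivalently on its point set). *)

(* Defs.v *)
From mathcomp Require Import all_boot all_fingroup.
From Stdlib Require Import ClassicalEpsilon Relations.
Set Implicit Arguments. Unset Strict Implicit. Unset Printing Implicit Defensive.

Definition toBool (P : Prop) : bool :=
  if excluded_middle_informative P then true else false.

Definition is_perm (s : seq nat) : Prop := perm_eq s (iota 0 (size s)).

(* Standardization (order-isomorphic rearrangement onto 0..size s - 1). *)
Definition std (s : seq nat) : seq nat :=
  map (fun y => count (fun z => z < y) s) s.

Definition contains (s t : seq nat) : Prop :=
  exists m : bitseq, std (mask m s) = t.

Definition perm_class (C : seq nat -> Prop) : Prop :=
  (forall s, C s -> is_perm s) /\ (forall s t, C s -> contains s t -> C t).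

Definition infinite_class (C : seq nat -> Prop) : Prop :=
  forall m, exists s, C s /\ m <= size s.

Definition empty_class (C : seq nat -> Prop) : Prop := forall s, ~ C s.

(* A gridding matrix with k columns and l rows: cell (i,j) = I_i x J_j. *)
Definition gmatrix (k l : nat) := 'I_k -> 'I_l -> (seq nat -> Prop).

(* Interval boundaries: I_i = [b i, b (i+1)) (0-based coordinates), possibly
   empty, consecutive, with union [0, n). *)
Definition bounds (k n : nat) (b : nat -> nat) : Prop :=
  b 0 = 0 /\ b k = n /\ (forall i, i < k -> b i <= b i.+1).

Definition in_int (b : nat -> nat) (i x : nat) : bool := (b i <= x) && (x < b i.+1).

Definition in_cell n (sigma : 'S_n) (cb rb : nat -> nat) (x : 'I_n) (i j : nat) : bool :=
  in_int cb i x && in_int rb j (sigma x).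

Definition is_gridding k l n (M : gmatrix k l) (sigma : 'S_n) (cb rb : nat -> nat) : Prop :=
  bounds k n cb /\ bounds l n rb /\
  forall (i : 'I_k) (j : 'I_l),
    let s := [seq val (sigma x) | x <- enum 'I_n & in_cell sigma cb rb x i j] in
    s != [::] -> M i j (std s).

Definition cell k l := ('I_k * 'I_l)%type.

Definition is_vertex k l (M : gmatrix k l) (c : cell k l) : Prop := infinite_class (M c.1 c.2).

Definition cell_adj k l (M : gmatrix k l) (a b : cell k l) : Prop :=
  is_vertex M a /\ is_vertex M b /\ a <> b /\
  ( (a.1 = b.1 /\ forall j : 'I_l,
        minn a.2 b.2 < j < maxn a.2 b.2 -> ~ infinite_class (M a.1 j))
  \/ (a.2 = b.2 /\ forall i : 'I_k,
        minn a.1 b.1 < i < maxn a.1 b.1 -> ~ infinite_class (M i a.2)) ).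

Definition cell_connected k l (M : gmatrix k l) : relation (cell k l) :=
  clos_refl_trans (cell k l) (cell_adj M).

Definition point := (nat * nat)%type.

(* Intervalicity of A inside the universe U (a finite set of integers): the
   number of maximal runs of elements of A in the sorted list of U.  For
   U = [n] this is the least number of integer intervals with union A; for U
   the coordinates of a point set this is the intervalicity in its
   standardization. *)
Definition intervalicity (A U : seq nat) : nat :=
  let us := sort leq (undup U) in
  count (fun i => (nth 0 us i \in A) && ((i == 0) || (nth 0 us i.-1 \notin A)))
        (iota 0 (size us)).

Definition grid_complexity (P A : seq point) : nat :=
  maxn (intervalicity (map fst A) (map fst P)) (intervalicity (map snd A) (map snd P)).

Inductive gtree := Leaf of point | Node of gtree & gtree.

Fixpoint leaves (t : gtree) : seq point :=
  match t with Leaf p => [:: p] | Node a b => leaves a ++ leaves b end.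

Fixpoint grid_width (P : seq point) (t : gtree) : nat :=
  match t with
  | Leaf p => grid_complexity P [:: p]
  | Node a b => maxn (grid_complexity P (leaves t))
                     (maxn (grid_width P a) (grid_width P b))
  end.

Definition grid_tree_of (P : seq point) (t : gtree) : Prop := perm_eq (leaves t) P.

Definition gw_le (P : seq point) (w : nat) : Prop :=
  P = [::] \/ exists t, grid_tree_of P t /\ grid_width P t <= w.

(* gw(P) = least grid-width of a grid tree of P.  Every grid tree has
   grid-width <= size P (intervalicity of A <= |A|), so the minimum over
   w <= size P is the true minimum. *)
Definition gw (P : seq point) : nat :=
  \big[minn/size P]_(w < (size P).+1 | toBool (gw_le P w)) w.

Definition sub_points n (sigma : 'S_n) (Q : 'I_n -> Prop) : seq point :=
  [seq (val x, val (sigma x)) | x <- enum 'I_n & toBool (Q x)].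

(* Main.v *)
Require Import Defs.
From Stdlib Require Import Relations Classical ClassicalEpsilon.
From mathcomp Require Import all_boot all_fingroup.
From mathcomp Require Import zify.
Set Implicit Arguments. Unset Strict Implicit. Unset Printing Implicit Defensive.

Fixpoint rr (p : pred nat) (b : bool) (s : seq nat) : nat :=
  match s with [::] => 0 | x :: s' => ((p x) && ~~ b) + rr p (p x) s' end.

Lemma rr_filter (A B : pred nat) s a a' b :
  {in s, forall x, A x -> B x} ->
  (a ==> a' && b) -> (b ==> (a == a')) ->
  rr A a s <= rr A a' (filter B s) + rr B b s.
Proof.
elim: s a a' b => [|x s IH] a a' b //= HAB.
have HABs : {in s, forall x, A x -> B x} by move=> y ys; apply: HAB; rewrite inE ys orbT.
have Hx := HAB x (mem_head _ _).
case Bx: (B x); case Ax: (A x) => /=.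
- move=> H1 H2; have := IH true true true HABs isT isT.
  by case: a a' b H1 H2 => [] [] [] //=; lia.
- move=> H1 H2; have := IH false false true HABs isT isT.
  by case: a a' b H1 H2 => [] [] [] //=; lia.
- by rewrite Hx in Bx.
- move=> H1 H2; have := IH false a' false HABs isT isT.
  by case: a a' b H1 H2 => [] [] [] //=; lia.
Qed.
Lemma rr_nth p b s : count (fun i => p (nth 0 s i) &&
   (if i == 0 then ~~ b else ~~ p (nth 0 s i.-1))) (iota 0 (size s)) = rr p b s.
Proof.
elim: s b => [|x s IH] b //=.
rewrite (iotaDl 1 0) count_map -IH; congr addn.
apply: eq_count => i /=; idtac.
by rewrite add0n; case: i.
Qed.

Lemma int_rr A U : intervalicity A U = rr (fun v => v \in A) false (sort leq (undup U)).
Proof.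
rewrite /intervalicity -rr_nth; apply: eq_count => i /=.
by case: i.
Qed.

Lemma rr_size p b s : rr p b s <= size s.
Proof. elim: s b => [|x s IH] b //=; have := IH (p x); case: (p x) b => [] [] /=; lia. Qed.

Lemma int_size A U : intervalicity A U <= size U.
Proof.
rewrite int_rr; apply: leq_trans (rr_size _ _ _) _.
by rewrite size_sort size_undup.
Qed.

Lemma rr_all p s : all p s -> rr p true s = 0.
Proof. elim: s => [|x s IH] //= /andP[-> H]; rewrite IH //. Qed.

Lemma int_full A U : {subset U <= A} -> intervalicity A U <= 1.
Proof.
move=> H; rewrite int_rr.
have : all (fun v => v \in A) (sort leq (undup U)).
  by apply/allP => v; rewrite mem_sort mem_undup => /H.
case: (sort leq (undup U)) => [|x s] //= /andP[-> Hs].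
by rewrite rr_all.
Qed.

Lemma sort_filter (U U1 : seq nat) : {subset U1 <= U} ->
  sort leq (undup U1) = filter (fun v => v \in U1) (sort leq (undup U)).
Proof.
move=> H; apply: (sorted_eq leq_trans anti_leq).
- exact: (sort_sorted leq_total).
- apply: sorted_filter; first exact: leq_trans.
  exact: (sort_sorted leq_total).
apply: uniq_perm.
- by rewrite sort_uniq undup_uniq.
- by rewrite filter_uniq // sort_uniq undup_uniq.
move=> v; rewrite mem_filter !mem_sort !mem_undup.
by case E: (v \in U1) => //=; rewrite H.
Qed.

Lemma int_sub (A U1 U : seq nat) : {subset A <= U1} -> {subset U1 <= U} ->
  intervalicity A U <= intervalicity A U1 + intervalicity U1 U.
Proof.
move=> HA HU; rewrite !int_rr (sort_filter HU).
by apply: rr_filter => // x _; apply: HA.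
Qed.

Lemma path_last (a : nat) s : path leq a s -> a <= last a s.
Proof.
elim: s a => //= y s IH a /andP[H1 H2]; exact: leq_trans H1 (IH _ H2).
Qed.

Lemma rr_steps (B : pred nat) (f : nat -> nat) x s :
  path leq (f x) (map f s) ->
  {in x :: s &, forall v w, f v = f w -> B v = B w} ->
  rr B (B x) s <= f (last x s) - f x.
Proof.
elim: s x => [|y s IH] x //= /andP[Hxy Hp] HB.
have HB' : {in y :: s &, forall v w, f v = f w -> B v = B w}.
  by move=> v w Hv Hw; apply: HB; rewrite inE ?Hv ?Hw orbT.
have := IH y Hp HB'.
have := path_last Hp; rewrite last_map => Hl.
case: (eqVneq (f x) (f y)) => Hfe.
- have -> : B y = B x by apply: HB; rewrite ?mem_head // inE mem_head orbT.
  rewrite andbN add0n Hfe; lia.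
- have : f x < f y by rewrite ltn_neqAle Hfe.
  case: (B y) (B x) => [] [] /=; lia.
Qed.

Lemma rr_runs (B : pred nat) (f : nat -> nat) K s : sorted leq s ->
  {homo f : x y / x <= y} -> (forall v, v \in s -> f v < K) ->
  {in s &, forall v w, f v = f w -> B v = B w} -> rr B false s <= K.
Proof.
case: s => [|x s] //= Hs Hf HK HB.
have Hp : path leq (f x) (map f s).
  exact: (homo_sorted Hf (x :: s) Hs).
have := rr_steps Hp HB.
have := HK (last x s) (mem_last _ _).
case: (B x) => /=; lia.
Qed.

Lemma int_grid n K (e : 'I_n -> nat) (inj : injective e) (q : pred 'I_n) (f : nat -> nat)
 (fmono : {homo f : x y / x <= y}) (fK : forall x, f (e x) < K)
 (fq : forall x y, f (e x) = f (e y) -> q x = q y) :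
 intervalicity [seq e x | x <- enum 'I_n & q x] [seq e x | x <- enum 'I_n] <= K.
Proof.
rewrite int_rr; apply: (rr_runs (f := f)) => //.
- exact: (sort_sorted leq_total).
- by move=> v; rewrite mem_sort mem_undup => /mapP[x _ ->].
move=> v w; rewrite !mem_sort !mem_undup => /mapP[x _ ->] /mapP[y _ ->] /fq Hq.
rewrite !mem_map // !mem_filter Hq; case: (q y) => //=; by rewrite -!enumT !mem_enum !inE.
Qed.

Definition col (b : nat -> nat) (k x : nat) := count (fun j => b j.+1 <= x) (iota 0 k).

Lemma bounds_mono k n b : bounds k n b -> forall j j', j <= j' -> j' <= k -> b j <= b j'.
Proof.
move=> [_ [_ H]] j j'; elim: j' => [|j' IH]; first by rewrite leqn0 => /eqP ->.
rewrite leq_eqVlt => /orP[/eqP -> //|Hj Hk].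
apply: leq_trans (IH Hj (ltnW Hk)) (H _ Hk).
Qed.

Lemma count_lt_iota i k : i <= k -> count (fun j => j < i) (iota 0 k) = i.
Proof.
move=> Hik; rewrite -(subnKC Hik) iotaD count_cat add0n.
rewrite (eq_in_count (a2 := predT)); last by move=> j; rewrite mem_iota.
rewrite (eq_in_count (a1 := fun j => j < i) (a2 := pred0)); last first.
  by move=> j; rewrite mem_iota /= => /andP[H _]; rewrite ltnNge H.
by rewrite count_predT size_iota count_pred0 addn0.
Qed.

Lemma col_spec k n b i x : bounds k n b -> i < k -> in_int b i x -> col b k x = i.
Proof.
move=> Hb Hi /andP[H1 H2]; rewrite /col -[RHS](count_lt_iota (ltnW Hi)).
apply: eq_in_count => j; rewrite mem_iota add0n /= => Hj.
case: (ltnP j i) => Hji.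
- by apply: leq_trans (bounds_mono Hb Hji (ltnW Hi)) H1.
- apply/negbTE; rewrite -ltnNge; apply: leq_trans H2 _.
  exact: (bounds_mono Hb _ Hj).
Qed.

Lemma col_ex k n b x : bounds k n b -> x < n -> exists i : 'I_k, in_int b i x.
Proof.
move=> Hb Hx.
suff: forall m, m <= k -> x < b m -> exists i : 'I_k, in_int b i x.
  by move=> H; apply: (H k) => //; case: Hb => [_ [-> _]].
elim=> [|m IH] Hm; first by case: Hb => [-> _].
case: (ltnP x (b m)) => Hxm; first by move=> _; apply: IH (ltnW Hm) Hxm.
move=> Hx2; exists (Ordinal Hm); by rewrite /in_int Hxm Hx2.
Qed.

Lemma col_lt k n b x : bounds k n b -> x < n -> col b k x < k.
Proof.
move=> Hb Hx; have [i Hi] := col_ex Hb Hx.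
by rewrite (col_spec Hb (ltn_ord i) Hi).
Qed.

Lemma col_mono b k : {homo col b k : x y / x <= y}.
Proof.
move=> x y Hxy; apply: sub_count => j /= H; exact: leq_trans H Hxy.
Qed.

Lemma toBoolP P : toBool P = true <-> P.
Proof. by rewrite /toBool; case: excluded_middle_informative. Qed.

Lemma toBool_eq P Q : (P <-> Q) -> toBool P = toBool Q.
Proof.
move=> H; rewrite /toBool.
by case: excluded_middle_informative => H1; case: excluded_middle_informative => H2 //; exfalso; tauto.
Qed.

Fixpoint mk (p : point) (s : seq point) : gtree :=
  match s with [::] => Leaf p | q :: s' => Node (Leaf p) (mk q s') end.

Lemma leaves_mk p s : leaves (mk p s) = p :: s.
Proof. by elim: s p => [|q s IH] p //=; rewrite IH. Qed.

Lemma gc_size P A : grid_complexity P A <= size P.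
Proof.
rewrite /grid_complexity geq_max.
have := int_size (map fst A) (map fst P); have := int_size (map snd A) (map snd P).
by rewrite !size_map => -> ->.
Qed.

Lemma gwidth_size P t : grid_width P t <= size P.
Proof.
elim: t => [p|a IHa b IHb] /=; first exact: gc_size.
by rewrite geq_max (gc_size P (leaves a ++ leaves b)) geq_max IHa IHb.
Qed.

Lemma gw_le_size P : gw_le P (size P).
Proof.
case: P => [|p s]; first by left.
right; exists (mk p s); split; first by rewrite /grid_tree_of leaves_mk.
exact: gwidth_size.
Qed.

Lemma gw_le_gw P : gw_le P (gw P).
Proof.
rewrite /gw; apply: big_ind.
- exact: gw_le_size.
- by move=> x y Hx Hy; rewrite /minn; case: ifP.
- by move=> i /toBoolP.
Qed.

Lemma big_min_le (I : eqType) (r : seq I) (p : pred I) (F : I -> nat) idx i0 :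
  i0 \in r -> p i0 -> \big[minn/idx]_(i <- r | p i) F i <= F i0.
Proof.
elim: r => [|x r IH] //; rewrite inE big_cons => /orP[/eqP <- ->|Hr Hp].
- exact: geq_minl.
- case: ifP => _; last exact: IH.
  apply: leq_trans (geq_minr _ _) (IH Hr Hp).
Qed.

Lemma gw_size P : gw P <= size P.
Proof.
rewrite /gw; apply: (big_ind (fun v => v <= size P)) => //.
- by move=> x y Hx Hy; rewrite geq_min Hx.
- by move=> i _; rewrite -ltnS.
Qed.

Lemma gw_min P w : gw_le P w -> gw P <= w.
Proof.
move=> H; case: (leqP w (size P)) => Hw; last exact: leq_trans (gw_size P) (ltnW Hw).
rewrite /gw; have Hw' : w < (size P).+1 by [].
apply: (@big_min_le _ _ _ (fun i : 'I_(size P).+1 => nat_of_ord i) _ (Ordinal Hw')).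
- exact: mem_index_enum.
- by apply/toBoolP.
Qed.

Lemma sub_map_seq (T U : eqType) (f : T -> U) (A B : seq T) :
  {subset A <= B} -> {subset map f A <= map f B}.
Proof. by move=> H v /mapP[a Ha ->]; apply: map_f; apply: H. Qed.

Lemma gc_sub P P1 A K : {subset A <= P1} -> {subset P1 <= P} ->
  intervalicity (map fst P1) (map fst P) <= K ->
  intervalicity (map snd P1) (map snd P) <= K ->
  grid_complexity P A <= grid_complexity P1 A + K.
Proof.
move=> HA HP H1 H2; rewrite /grid_complexity.
have e1 := int_sub (sub_map_seq (f:=fst) HA) (sub_map_seq (f:=fst) HP).
have e2 := int_sub (sub_map_seq (f:=snd) HA) (sub_map_seq (f:=snd) HP).
rewrite geq_max; apply/andP; split.
- by apply: leq_trans e1 _; apply: leq_add => //; apply: leq_maxl.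
- by apply: leq_trans e2 _; apply: leq_add => //; apply: leq_maxr.
Qed.

Lemma gw_sub P P1 t K : {subset leaves t <= P1} -> {subset P1 <= P} ->
  intervalicity (map fst P1) (map fst P) <= K ->
  intervalicity (map snd P1) (map snd P) <= K ->
  grid_width P t <= grid_width P1 t + K.
Proof.
move=> Ht HP H1 H2; elim: t Ht => [p|a IHa b IHb] Ht /=.
- exact: gc_sub.
- have Ha : {subset leaves a <= P1} by move=> v Hv; apply: Ht; rewrite /= mem_cat Hv.
  have Hb : {subset leaves b <= P1} by move=> v Hv; apply: Ht; rewrite /= mem_cat Hv orbT.
  have := gc_sub (A := leaves a ++ leaves b) Ht HP H1 H2.
  have := IHa Ha; have := IHb Hb.
  set x1 := grid_width P a; set x2 := grid_width P b; set x3 := grid_complexity P _.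
  set y1 := grid_width P1 a; set y2 := grid_width P1 b; set y3 := grid_complexity P1 _.
  lia.
Qed.

Lemma comp_vertex k l (M : gmatrix k l) c0 c : is_vertex M c0 ->
  cell_connected M c0 c -> is_vertex M c.
Proof.
move=> H0 H; have {}H := clos_rt_rtn1 _ _ _ _ H.
elim: H => // y z [_ [Hz _]] _ _; exact: Hz.
Qed.

Lemma col_conn k l (M : gmatrix k l) (i : 'I_k) (a b : 'I_l) :
  is_vertex M (i, a) -> is_vertex M (i, b) -> cell_connected M (i, a) (i, b).
Proof.
suff: forall d (a b : 'I_l), maxn a b - minn a b < d ->
  is_vertex M (i, a) -> is_vertex M (i, b) -> cell_connected M (i, a) (i, b).
  by move=> H; apply: (H (maxn a b - minn a b).+1).
elim=> [|d IH] {}a {}b Hd Ha Hb //.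
case: (classic (exists m : 'I_l, minn a b < m < maxn a b /\ infinite_class (M i m)))
  => [[m [/andP[Hm1 Hm2] Hinf]]|Hno].
- apply: (rt_trans _ _ _ (i, m)); apply: IH => //; lia.
- case: (eqVneq a b) => [<-|Hab]; first exact: rt_refl.
  apply: rt_step; split; first exact: Ha.
  split; first exact: Hb.
  split; first by case=> /eqP; rewrite (negbTE Hab).
  left; split => // j Hj Hinf; apply: Hno; exists j; split => //.
Qed.

Lemma row_conn k l (M : gmatrix k l) (j : 'I_l) (a b : 'I_k) :
  is_vertex M (a, j) -> is_vertex M (b, j) -> cell_connected M (a, j) (b, j).
Proof.
suff: forall d (a b : 'I_k), maxn a b - minn a b < d ->
  is_vertex M (a, j) -> is_vertex M (b, j) -> cell_connected M (a, j) (b, j).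
  by move=> H; apply: (H (maxn a b - minn a b).+1).
elim=> [|d IH] {}a {}b Hd Ha Hb //.
case: (classic (exists m : 'I_k, minn a b < m < maxn a b /\ infinite_class (M m j)))
  => [[m [/andP[Hm1 Hm2] Hinf]]|Hno].
- apply: (rt_trans _ _ _ (m, j)); apply: IH => //; lia.
- case: (eqVneq a b) => [<-|Hab]; first exact: rt_refl.
  apply: rt_step; split; first exact: Ha.
  split; first exact: Hb.
  split; first by case=> /eqP; rewrite (negbTE Hab).
  right; split => // i Hi Hinf; apply: Hno; exists i; split => //.
Qed.

Theorem mainTheorem15 (k l : nat) (M : gmatrix k l)
  (Hclass : forall i j, perm_class (M i j))
  (Hentries : forall i j, infinite_class (M i j) \/ empty_class (M i j))
  (c0 : cell k l) (Hc0 : is_vertex M c0)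
  (Hdisc : exists c1, is_vertex M c1 /\ ~ cell_connected M c0 c1)
  (n : nat) (sigma : 'S_n) (cb rb : nat -> nat)
  (Hgrid : is_gridding M sigma cb rb) :
  let comp := fun c => cell_connected M c0 c in
  let C1 := fun i : 'I_k => exists j : 'I_l, comp (i, j) in
  let R1 := fun j : 'I_l => exists i : 'I_k, comp (i, j) in
  let pi1 := sub_points sigma (fun x => exists (i : 'I_k) (j : 'I_l),
               C1 i /\ R1 j /\ in_cell sigma cb rb x i j) in
  let pi2 := sub_points sigma (fun x => exists (i : 'I_k) (j : 'I_l),
               ~ C1 i /\ ~ R1 j /\ in_cell sigma cb rb x i j) in
  let pi := sub_points sigma (fun _ => True) in
  gw pi <= maxn (gw pi1) (gw pi2) + maxn k l.
Proof.
pose comp := fun c => cell_connected M c0 c.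
pose C1 := fun i : 'I_k => exists j : 'I_l, comp (i, j).
pose R1 := fun j : 'I_l => exists i : 'I_k, comp (i, j).
pose pi1 := sub_points sigma (fun x => exists (i : 'I_k) (j : 'I_l),
               C1 i /\ R1 j /\ in_cell sigma cb rb x i j).
pose pi2 := sub_points sigma (fun x => exists (i : 'I_k) (j : 'I_l),
               ~ C1 i /\ ~ R1 j /\ in_cell sigma cb rb x i j).
pose pi := sub_points sigma (fun _ => True).
change (gw pi <= maxn (gw pi1) (gw pi2) + maxn k l).
have [Hbc [Hbr Hcell]] := Hgrid.
have Hk : 0 < k by case: c0 {Hc0 Hdisc comp C1 R1 pi1 pi2} => [[i Hi] _] /=; lia.
have Hvert : forall (x : 'I_n) (i : 'I_k) (j : 'I_l),
    in_cell sigma cb rb x i j -> is_vertex M (i, j).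
  move=> x i j Hx; have /= H := Hcell i j.
  have Hne : [seq val (sigma x0) | x0 <- enum 'I_n & in_cell sigma cb rb x0 i j] != [::].
    apply/eqP => E.
    have : val (sigma x) \in [seq val (sigma x0) | x0 <- enum 'I_n & in_cell sigma cb rb x0 i j].
      by apply: map_f; rewrite mem_filter Hx mem_enum.
    by rewrite E.
  case: (Hentries i j) => // He; exfalso; exact: He _ (H Hne).
have Hcv : forall c, comp c -> is_vertex M c by move=> c; apply: comp_vertex.
have Hdich : forall i j, is_vertex M (i, j) -> (C1 i /\ R1 j) \/ (~ C1 i /\ ~ R1 j).
  move=> i j Hv; case: (classic (comp (i, j))) => Hc.
  - by left; split; [exists j | exists i].
  - right; split.
    + move=> [j' Hj']; apply: Hc; apply: (rt_trans _ _ _ (i, j')) => //.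
      by apply: col_conn => //; apply: Hcv.
    + move=> [i' Hi']; apply: Hc; apply: (rt_trans _ _ _ (i', j)) => //.
      by apply: row_conn => //; apply: Hcv.
have uc : forall (i i' : 'I_k) (x : nat), in_int cb i x -> in_int cb i' x -> i' = i.
  move=> i i' x H H'; apply: val_inj.
  by rewrite /= -(col_spec Hbc (ltn_ord i) H) (col_spec Hbc (ltn_ord i') H').
have ur : forall (j j' : 'I_l) (x : nat), in_int rb j x -> in_int rb j' x -> j' = j.
  move=> j j' x H H'; apply: val_inj.
  by rewrite /= -(col_spec Hbr (ltn_ord j) H) (col_spec Hbr (ltn_ord j') H').
have Hchar : forall (x : 'I_n) (i : 'I_k) (j : 'I_l), in_int cb i x -> in_int rb j (sigma x) ->
   ((exists (i' : 'I_k) (j' : 'I_l), C1 i' /\ R1 j' /\ in_cell sigma cb rb x i' j') <-> C1 i)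
   /\ ((exists (i' : 'I_k) (j' : 'I_l), C1 i' /\ R1 j' /\ in_cell sigma cb rb x i' j') <-> R1 j)
   /\ ((exists (i' : 'I_k) (j' : 'I_l), ~ C1 i' /\ ~ R1 j' /\ in_cell sigma cb rb x i' j') <-> ~ C1 i)
   /\ ((exists (i' : 'I_k) (j' : 'I_l), ~ C1 i' /\ ~ R1 j' /\ in_cell sigma cb rb x i' j') <-> ~ R1 j).
  move=> x i j Hi Hj.
  have Hij : in_cell sigma cb rb x i j by rewrite /in_cell Hi Hj.
  have D := Hdich i j (Hvert x i j Hij).
  have U : forall (i' : 'I_k) (j' : 'I_l), in_cell sigma cb rb x i' j' -> i' = i /\ j' = j.
    move=> i' j' /andP[H1 H2]; split; [exact: (uc _ _ _ Hi H1) | exact: (ur _ _ _ Hj H2)].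
  split; [|split; [|split]]; split.
  - by move=> [i' [j' [H1 [H2 /U [E1 E2]]]]]; rewrite -E1.
  - by move=> H; exists i, j; case: D => [[]|[]].
  - by move=> [i' [j' [H1 [H2 /U [E1 E2]]]]]; rewrite -E2.
  - by move=> H; exists i, j; case: D => [[]|[]].
  - by move=> [i' [j' [H1 [H2 /U [E1 E2]]]]]; rewrite -E1.
  - by move=> H; exists i, j; case: D => [[]|[]].
  - by move=> [i' [j' [H1 [H2 /U [E1 E2]]]]]; rewrite -E2.
  - by move=> H; exists i, j; case: D => [[]|[]].

pose g := fun x : 'I_n => (nat_of_ord x, nat_of_ord (sigma x)).
have Epi : pi = map g (enum 'I_n).
  rewrite /pi /sub_points (eq_filter (a2 := predT)) ?filter_predT // => x.
  by apply/toBoolP.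
have Hcolx : forall x : 'I_n, exists i : 'I_k, in_int cb i x
  by move=> x; apply: col_ex Hbc (ltn_ord x).
have Hrowx : forall x : 'I_n, exists j : 'I_l, in_int rb j (sigma x)
  by move=> x; apply: col_ex Hbr (ltn_ord (sigma x)).
have Hpart : forall x,
  toBool (exists (i : 'I_k) (j : 'I_l), ~ C1 i /\ ~ R1 j /\ in_cell sigma cb rb x i j)
  = ~~ toBool (exists (i : 'I_k) (j : 'I_l), C1 i /\ R1 j /\ in_cell sigma cb rb x i j).
  move=> x; have [i Hi] := Hcolx x; have [j Hj] := Hrowx x.
  have [h1 [_ [h3 _]]] := Hchar x i j Hi Hj.
  rewrite /toBool; case: excluded_middle_informative => H1;
    case: excluded_middle_informative => H2 //=; exfalso; tauto.
have Hperm : perm_eq pi (pi1 ++ pi2).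
  set q1 := (fun x => toBool (exists (i : 'I_k) (j : 'I_l), C1 i /\ R1 j /\ in_cell sigma cb rb x i j)).
  have HE : perm_eq ([seq x <- enum 'I_n | q1 x] ++ [seq x <- enum 'I_n | predC q1 x]) (enum 'I_n).
    by apply/permPl; apply: perm_filterC.
  rewrite Epi /pi1 /pi2 /sub_points -/q1 (eq_filter Hpart) -map_cat perm_sym.
  exact: perm_map HE.
have Hfst : forall q : 'I_n -> Prop,
    (forall (x y : 'I_n) (i : 'I_k), in_int cb i x -> in_int cb i y -> (q x <-> q y)) ->
    intervalicity (map fst (sub_points sigma q)) (map fst pi) <= maxn k l.
  move=> q Hq.
  have -> : map fst pi = [seq nat_of_ord x | x <- enum 'I_n] by rewrite Epi -map_comp.
  have -> : map fst (sub_points sigma q) = [seq nat_of_ord x | x <- enum 'I_n & toBool (q x)].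
    by rewrite /sub_points -map_comp.
  apply: leq_trans (leq_maxl k l).
  apply: (@int_grid n k (fun x => nat_of_ord x) _ _ (col cb k)).
  - by move=> x y /val_inj.
  - exact: col_mono.
  - by move=> x; apply: col_lt Hbc (ltn_ord x).
  move=> x y Hc; have [ix Hix] := Hcolx x; have [iy Hiy] := Hcolx y.
  have E : ix = iy.
    apply: val_inj; rewrite /= -(col_spec Hbc (ltn_ord ix) Hix).
    by rewrite -(col_spec Hbc (ltn_ord iy) Hiy).
  apply: toBool_eq; apply: (Hq x y ix) => //; by rewrite E.
have Hsnd : forall q : 'I_n -> Prop,
    (forall (x y : 'I_n) (j : 'I_l), in_int rb j (sigma x) -> in_int rb j (sigma y) -> (q x <-> q y)) ->
    intervalicity (map snd (sub_points sigma q)) (map snd pi) <= maxn k l.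
  move=> q Hq.
  have -> : map snd pi = [seq nat_of_ord (sigma x) | x <- enum 'I_n] by rewrite Epi -map_comp.
  have -> : map snd (sub_points sigma q) = [seq nat_of_ord (sigma x) | x <- enum 'I_n & toBool (q x)].
    by rewrite /sub_points -map_comp.
  apply: leq_trans (leq_maxr k l).
  apply: (@int_grid n l (fun x => nat_of_ord (sigma x)) _ _ (col rb l)).
  - by move=> x y /val_inj /perm_inj.
  - exact: col_mono.
  - by move=> x; apply: col_lt Hbr (ltn_ord (sigma x)).
  move=> x y Hc; have [ix Hix] := Hrowx x; have [iy Hiy] := Hrowx y.
  have E : ix = iy.
    apply: val_inj; rewrite /= -(col_spec Hbr (ltn_ord ix) Hix).
    by rewrite -(col_spec Hbr (ltn_ord iy) Hiy).
  apply: toBool_eq; apply: (Hq x y ix) => //; by rewrite E.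
have Hf1 : intervalicity (map fst pi1) (map fst pi) <= maxn k l.
  rewrite /pi1; apply: Hfst => x y i Hx Hy.
  have [jx Hjx] := Hrowx x; have [jy Hjy] := Hrowx y.
  have := Hchar x i jx Hx Hjx; have := Hchar y i jy Hy Hjy; tauto.
have Hf2 : intervalicity (map fst pi2) (map fst pi) <= maxn k l.
  rewrite /pi2; apply: Hfst => x y i Hx Hy.
  have [jx Hjx] := Hrowx x; have [jy Hjy] := Hrowx y.
  have := Hchar x i jx Hx Hjx; have := Hchar y i jy Hy Hjy; tauto.
have Hs1 : intervalicity (map snd pi1) (map snd pi) <= maxn k l.
  rewrite /pi1; apply: Hsnd => x y j Hx Hy.
  have [ix Hix] := Hcolx x; have [iy Hiy] := Hcolx y.
  have := Hchar x ix j Hix Hx; have := Hchar y iy j Hiy Hy; tauto.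
have Hs2 : intervalicity (map snd pi2) (map snd pi) <= maxn k l.
  rewrite /pi2; apply: Hsnd => x y j Hx Hy.
  have [ix Hix] := Hcolx x; have [iy Hiy] := Hcolx y.
  have := Hchar x ix j Hix Hx; have := Hchar y iy j Hiy Hy; tauto.
have Hsub1 : {subset pi1 <= pi}.
  by move=> v Hv; rewrite (perm_mem Hperm) mem_cat Hv.
have Hsub2 : {subset pi2 <= pi}.
  by move=> v Hv; rewrite (perm_mem Hperm) mem_cat Hv orbT.
set K := maxn k l.
have HK : 1 <= K by rewrite /K; lia.
have Hmax1 : gw pi1 <= maxn (gw pi1) (gw pi2) by apply: leq_maxl.
have Hmax2 : gw pi2 <= maxn (gw pi1) (gw pi2) by apply: leq_maxr.
set m := maxn (gw pi1) (gw pi2).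
have Lt1 : forall t, perm_eq (leaves t) pi1 -> {subset leaves t <= pi1}.
  by move=> t Ht v; rewrite (perm_mem Ht).
have Lt2 : forall t, perm_eq (leaves t) pi2 -> {subset leaves t <= pi2}.
  by move=> t Ht v; rewrite (perm_mem Ht).
case: (gw_le_gw pi1) => [E1|[t1 [Ht1 Hw1]]]; case: (gw_le_gw pi2) => [E2|[t2 [Ht2 Hw2]]].
- apply: leq_trans (gw_size pi) _.
  by rewrite (perm_size Hperm) E1 E2.
- apply: leq_trans (gw_min (w := grid_width pi t2) _) _.
  + right; exists t2; split => //.
    by rewrite /grid_tree_of (perm_trans Ht2) // perm_sym; move: Hperm; rewrite E1.
  + have := gw_sub (t := t2) (Lt2 _ Ht2) Hsub2 Hf2 Hs2.
    move=> H; apply: leq_trans H _; rewrite leq_add2r; exact: leq_trans Hw2 Hmax2.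
- apply: leq_trans (gw_min (w := grid_width pi t1) _) _.
  + right; exists t1; split => //.
    by rewrite /grid_tree_of (perm_trans Ht1) // perm_sym; move: Hperm; rewrite E2 cats0.
  + have := gw_sub (t := t1) (Lt1 _ Ht1) Hsub1 Hf1 Hs1.
    move=> H; apply: leq_trans H _; rewrite leq_add2r; exact: leq_trans Hw1 Hmax1.
- apply: leq_trans (gw_min (w := grid_width pi (Node t1 t2)) _) _.
  + right; exists (Node t1 t2); split => //.
    by apply: perm_trans (perm_cat Ht1 Ht2) _; rewrite perm_sym.
  + rewrite /=.
    have Hr : grid_complexity pi (leaves t1 ++ leaves t2) <= 1.
      have Hp : perm_eq pi (leaves t1 ++ leaves t2).
        by apply: perm_trans Hperm _; rewrite perm_sym; apply: perm_cat.
      rewrite /grid_complexity geq_max !int_full //.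
      * by move=> v /mapP[p Hp' ->]; apply: map_f; rewrite -(perm_mem Hp).
      * by move=> v /mapP[p Hp' ->]; apply: map_f; rewrite -(perm_mem Hp).
    have G1 := gw_sub (t := t1) (Lt1 _ Ht1) Hsub1 Hf1 Hs1.
    have G2 := gw_sub (t := t2) (Lt2 _ Ht2) Hsub2 Hf2 Hs2.
    move: Hr G1 G2 Hw1 Hw2 Hmax1 Hmax2 HK.
    set a := grid_complexity _ _; set b1 := grid_width pi t1; set b2 := grid_width pi t2.
    set c1 := grid_width pi1 t1; set c2 := grid_width pi2 t2.
    set d1 := gw pi1; set d2 := gw pi2.
    lia.
Qed.
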